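(* Let $(x_n)_{n\ge0}$ be an infinite path in $\Gamma$ with $\ell(x_n)=n$. For each nonreal $z$ let $v_z$ be the nonzero solution of $Jv_z=zv_z$ on $\Gamma$ normalized by $v_z(x_0)=1$. Then for each $n\ge0$ there exist polynomials $b_n$ and $a_{n,x}$ ($x\in\Gamma_{x_n}$) with real coefficients such that $v_z(x)=a_{n,x}(z)/b_n(z)$ for all $x\in\Gamma_{x_n}$ and all nonreal $z$; moreover $b_n$ divides $b_{n+1}$ for every $n$.
   Context: Let $\Gamma$ be an infinite connected tree whose vertices are arranged in levels $\ell(x)\in\{0,1,2,\dots\}$: every vertex $x$ is adjacent to exactly one vertex $x'$ with $\ell(x')=\ell(x)+1$; for $\ell(x)\ge 1$ the set $N_x=\{y:\ y'=x\}$ of neighbours of $x$ on level $\ell(x)-1$ is finite and nonempty; $N_x=\emptyset$ if $\ell(x)=0$; there are no other edges. For $x\in\Gamma$, $\Gamma_x$ is the finite subtree consisting of $x$ and all its descendants. Fix $\lambda_x>0$, $\beta_x\in\mathbb R$. The Jacobi matrix $J$ acts on functions $v:\Gamma\to\mathbb C$ by $(Jv)(x)=\lambda_x v(x')+\beta_x v(x)+\sum_{y\in N_x}\lambda_y v(y)$. For nonreal $z$ a nonzero solution of $Jv=zv$ on $\Gamma$ exists, is unique up to a constant multiple, and vanishes nowhere. *)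

(* Defs.v *)
(* The complex numbers are modelled by an arbitrary
   numClosedFieldType C (e.g. the field of complex numbers); "real" means
   x \is Num.real, "nonreal" means z \notin Num.real. *)
From HB Require Import structures.
From mathcomp Require Import all_boot all_order all_algebra.
Set Implicit Arguments. Unset Strict Implicit. Unset Printing Implicit Defensive.
Import Order.TTheory GRing.Theory Num.Theory.
Local Open Scope ring_scope.

(* Levelled tree data: vertex type V, level lev, parent par (the unique
   neighbour x' one level up), ch x = list of the neighbours one level down
   (N_x, as a duplicate-free list). *)
Definition is_levelled_tree (V : eqType) (lev : V -> nat) (par : V -> V)
  (ch : V -> seq V) : Prop :=
  [/\ (forall x, lev (par x) = (lev x).+1),
      (forall x y, (y \in ch x) = (par y == x)),
      (forall x, uniq (ch x)),
      (forall x, (0 < lev x)%N -> ch x != [::]) &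
      (* connectedness: any two vertices have a common ancestor *)
      (forall x y, exists m n, iter m par x = iter n par y)].

(* y lies in Gamma_x : y is x or a descendant of x *)
Definition in_subtree (V : Type) (par : V -> V) (x y : V) : Prop :=
  exists k, iter k par y = x.

Definition jacobi (C : numClosedFieldType) (V : eqType) (par : V -> V)
  (ch : V -> seq V) (lam beta : V -> C) (v : V -> C) (x : V) : C :=
  lam x * v (par x) + beta x * v x + \sum_(y <- ch x) lam y * v y.

(* Main.v *)
Require Import Defs.
From HB Require Import structures.
From mathcomp Require Import all_boot all_order all_algebra ring.
From Stdlib Require Import ClassicalEpsilon Classical.
Import Order.TTheory GRing.Theory Num.Theory.
Set Implicit Arguments. Unset Strict Implicit. Unset Printing Implicit Defensive.
Local Open Scope ring_scope.

Lemma choice_fun (A B : Type) (R : A -> B -> Prop) :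
  (forall a, exists b, R a b) -> exists f : A -> B, forall a, R a (f a).
Proof.
move=> H; exists (fun a => proj1_sig (constructive_indefinite_description _ (H a))).
by move=> a; case: (constructive_indefinite_description _ (H a)).
Qed.


Definition pR (C : numClosedFieldType) (p : {poly C}) := p \is a polyOver Num.real.
Lemma pR_D (C : numClosedFieldType) (p q : {poly C}) : pR p -> pR q -> pR (p + q).
Proof. move=> /polyOverP Hp /polyOverP Hq; apply/polyOverP => i; rewrite coefD rpredD //. Qed.
Lemma pR_B (C : numClosedFieldType) (p q : {poly C}) : pR p -> pR q -> pR (p - q).
Proof. move=> /polyOverP Hp /polyOverP Hq; apply/polyOverP => i; rewrite coefB rpredB //. Qed.
Lemma pR_M (C : numClosedFieldType) (p q : {poly C}) : pR p -> pR q -> pR (p * q).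
Proof. move=> Hp Hq; exact: (polyOver_mulr_2closed Hp Hq). Qed.
Lemma pR_C (C : numClosedFieldType) (c : C) : c \is Num.real -> pR c%:P.
Proof. by move=> Hc; rewrite /pR polyOverC. Qed.
Lemma pR_X (C : numClosedFieldType) : @pR C 'X.
Proof. exact: polyOverX. Qed.
Lemma pR_1 (C : numClosedFieldType) : @pR C 1.
Proof. by apply: pR_C; rewrite rpred1. Qed.
Lemma pR_0 (C : numClosedFieldType) : @pR C 0.
Proof. by apply: pR_C; rewrite rpred0. Qed.
Lemma pR_sum (C : numClosedFieldType) (I : Type) (r : seq I) (P : pred I) (F : I -> {poly C}) : (forall i, P i -> pR (F i)) -> pR (\sum_(i <- r | P i) F i).
Proof. move=> H; apply: (big_ind (@pR C)) => //; [exact: pR_0 | exact: pR_D]. Qed.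
Lemma pR_prod (C : numClosedFieldType) (I : Type) (r : seq I) (P : pred I) (F : I -> {poly C}) : (forall i, P i -> pR (F i)) -> pR (\prod_(i <- r | P i) F i).
Proof. move=> H; apply: (big_ind (@pR C)) => //; [exact: pR_1 | exact: pR_M]. Qed.

Definition Rgood (C : numClosedFieldType) (R : {poly C}) :=
  R \is a polyOver Num.real /\ forall z : C, z \notin Num.real -> R.[z] != 0.

Definition Qgood (C : numClosedFieldType) (V : Type) (par : V -> V)
  (v : C -> V -> C) (c : V) (R : {poly C}) :=
 (forall w, in_subtree par c w -> exists P : {poly C}, P \is a polyOver Num.real /\
    forall z, z \notin Num.real -> v z w = v z (par c) * (P.[z] / R.[z])) /\
 (exists P : {poly C}, P \is a polyOver Num.real /\ forall z, z \notin Num.real ->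
    v z c = v z (par c) * (P.[z] / R.[z]) /\ 'Im z * 'Im (P.[z] / R.[z]) < 0).

Lemma Rgood_mul (C : numClosedFieldType) (R K : {poly C}) :
  Rgood R -> Rgood K -> Rgood (R * K).
Proof.
move=> [HR1 HR2] [HK1 HK2]; split; first exact: pR_M.
by move=> z Hz; rewrite hornerM mulf_neq0 // ?HR2 ?HK2.
Qed.

Lemma Qgood_mul (C : numClosedFieldType) (V : Type) par (v : C -> V -> C) c R K :
  Qgood par v c R -> Rgood K -> Qgood par v c (R * K).
Proof.
move=> [H1 [P [HP1 HP2]]] [HK1 HK2].
have E : forall (P : {poly C}) z, z \notin Num.real -> (P * K).[z] / (R * K).[z] = P.[z] / R.[z].
  move=> Q z Hz; rewrite !hornerM; have := HK2 z Hz => Hk.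
  by rewrite invfM mulrACA divff // mulr1.
split.
  move=> w Hw; have [Q [HQ1 HQ2]] := H1 w Hw.
  exists (Q * K); split; first exact: pR_M.
  by move=> z Hz; rewrite E // HQ2.
exists (P * K); split; first exact: pR_M.
by move=> z Hz; rewrite E //; apply: HP2.
Qed.

Lemma common (C : numClosedFieldType) (V : eqType) par (v : C -> V -> C) (s : seq V) :
  (forall c, c \in s -> exists R, Rgood R /\ Qgood par v c R) ->
  exists R, Rgood R /\ forall c, c \in s -> Qgood par v c R.
Proof.
elim: s => [|c s IH] H.
  exists 1; split=> //; split; first exact: pR_1.
  by move=> z _; rewrite hornerC oner_neq0.
have [Rc [HRc HQc]] := H c (mem_head _ _).
have [Rs [HRs HQs]] : exists R, Rgood R /\ forall c, c \in s -> Qgood par v c R.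
  by apply: IH => c' Hc'; apply: H; rewrite inE Hc' orbT.
exists (Rc * Rs); split; first exact: Rgood_mul.
move=> c'; rewrite inE => /orP [/eqP -> | Hc'].
  exact: Qgood_mul.
rewrite mulrC; apply: Qgood_mul => //; exact: HQs.
Qed.

Lemma key (C : numClosedFieldType) (V : eqType) (s : seq V) (lam m : V -> C) (z b lu : C) :
  z \notin Num.real -> b \is Num.real -> lu \is Num.real -> 0 < lu ->
  (forall c, c \in s -> [/\ lam c \is Num.real, 0 < lam c & 'Im z * 'Im (m c) < 0]) ->
  let S := z - b - \sum_(c <- s) lam c * m c in
  S != 0 /\ 'Im z * 'Im (lu / S) < 0.
Proof.
move=> Hz Hb Hlu Hlu0 Hs S.
have HIm : 'Im S = 'Im z - \sum_(c <- s) lam c * 'Im (m c).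
  rewrite /S !raddfB /= raddf_sum /=.
  have -> : 'Im b = 0 by apply/Creal_ImP.
  rewrite subr0; congr (_ - _); rewrite big_seq_cond [RHS]big_seq_cond.
  apply: eq_bigr => c /andP [Hc _]; have [Hl _ _] := Hs c Hc; by rewrite ImMl.
have Hpos : 0 < 'Im z * 'Im S.
  have Hz0 : 'Im z != 0 by apply/eqP => /Creal_ImP; rewrite (negbTE Hz).
  have H1 : 0 < 'Im z * 'Im z.
    by rewrite -expr2 -real_normK ?Creal_Im // exprn_gt0 // normr_gt0.
  apply: (lt_le_trans H1).
  rewrite HIm mulrBr mulr_sumr -sumrN lerDl big_seq; apply: sumr_ge0 => c Hc.
  have [_ Hl0 Hm] := Hs c Hc.
  by rewrite mulrCA oppr_ge0 pmulr_rle0 // ltW.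
have HS : S != 0.
  by apply/eqP => HS0; move: Hpos; rewrite HS0 raddf0 mulr0 ltxx.
split => //.
rewrite ImMl // ImV.
have -> : 'Im z * (lu * (- 'Im S / `|S| ^+ 2)) = - ((lu / `|S| ^+ 2) * ('Im z * 'Im S)) by ring.
rewrite oppr_lt0 mulr_gt0 // divr_gt0 // exprn_gt0 // normr_gt0 //.
Qed.

Lemma subtree_split (V : eqType) (par : V -> V) (ch : V -> seq V) (u w : V) :
  (forall x y, (y \in ch x) = (par y == x)) ->
  in_subtree par u w -> w = u \/ exists c, c \in ch u /\ in_subtree par c w.
Proof.
move=> Hch [[|k] /= Hk]; first by left.
right; exists (iter k par w); split; first by rewrite Hch Hk.
by exists k.
Qed.

Lemma step (C : numClosedFieldType) (V : eqType) (par : V -> V) (ch : V -> seq V)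
  (lam beta : V -> C) (v : C -> V -> C) (u : V) :
  (forall x y, (y \in ch x) = (par y == x)) ->
  (forall x, lam x \is Num.real /\ 0 < lam x) ->
  (forall x, beta x \is Num.real) ->
  (forall z, z \notin Num.real -> forall x, jacobi par ch lam beta (v z) x = z * v z x) ->
  (forall c, c \in ch u -> exists R, Rgood R /\ Qgood par v c R) ->
  exists R, Rgood R /\ Qgood par v u R.
Proof.
move=> Hch Hlam Hbeta Hv Hc.
have [R [[HR1 HR2] HQ]] := common Hc.
have H : forall c, exists P : {poly C}, c \in ch u -> pR P /\ forall z, z \notin Num.real ->
    v z c = v z u * (P.[z] / R.[z]) /\ 'Im z * 'Im (P.[z] / R.[z]) < 0.
  move=> c; case Hcu: (c \in ch u); last by exists 0.
  have [_ [P [HP1 HP2]]] := HQ c Hcu.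
  have Hpc : par c = u by apply/eqP; rewrite -Hch.
  rewrite Hpc in HP2; by exists P.
have [Pc HPc] := choice_fun H.
pose S := fun z => z - beta u - \sum_(c <- ch u) lam c * ((Pc c).[z] / R.[z]).
pose A := ('X - (beta u)%:P) * R - \sum_(c <- ch u) (lam c)%:P * Pc c.
have HA : forall z, z \notin Num.real -> A.[z] = R.[z] * S z.
  move=> z Hz; rewrite /A /S hornerD hornerN hornerM hornerXsubC horner_sum mulrBr mulr_sumr.
  congr (_ - _); first by rewrite mulrC.
  apply: eq_bigr => c _; rewrite hornerCM; field; exact: HR2.
have HK : forall z, z \notin Num.real -> S z != 0 /\ 'Im z * 'Im (lam u / S z) < 0.
  move=> z Hz.
  have Hs : forall c, c \in ch u -> [/\ lam c \is Num.real, 0 < lam c &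
      'Im z * 'Im ((fun c => (Pc c).[z] / R.[z]) c) < 0].
    move=> c Hc'; have [Hl1 Hl2] := Hlam c; split => //; exact: ((HPc c Hc').2 z Hz).2.
  exact: (key Hz (Hbeta u) (Hlam u).1 (Hlam u).2 Hs).
have HvU : forall z, z \notin Num.real -> v z u = v z (par u) * (lam u / S z).
  move=> z Hz; have [HS _] := HK z Hz; have := Hv z Hz u; rewrite /jacobi.
  have -> : \sum_(y <- ch u) lam y * v z y =
      v z u * \sum_(c <- ch u) lam c * ((Pc c).[z] / R.[z]).
    rewrite mulr_sumr big_seq [RHS]big_seq; apply: eq_bigr => c Hc'.
    rewrite (((HPc c Hc').2 z Hz).1).
    by rewrite mulrCA.
  move=> E; apply: (mulIf HS); rewrite -mulrA divfK //.
  rewrite /S !mulrBr [v z u * z]mulrC -E; ring.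
have Hratio : forall z, z \notin Num.real ->
    ((lam u)%:P * R).[z] / A.[z] = lam u / S z.
  move=> z Hz; have [HS _] := HK z Hz; have HRz := HR2 z Hz.
  rewrite hornerCM HA //; field; by rewrite HRz HS.
exists A; split.
  split.
    apply: pR_B; first by apply: pR_M => //; apply: pR_B; [exact: pR_X | exact: pR_C].
    rewrite big_seq; apply: pR_sum => c Hc'; apply: pR_M; first exact: pR_C (Hlam c).1.
    exact: (HPc c Hc').1.
  by move=> z Hz; rewrite HA // mulf_neq0 // ?HR2 // (HK z Hz).1.
split.
  move=> w Hw; have [->|[c [Hc' Hcw]]] := subtree_split Hch Hw.
    exists ((lam u)%:P * R); split; first by apply: pR_M => //; exact: pR_C (Hlam u).1.
    by move=> z Hz; rewrite Hratio // HvU.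
  have [P [HP1 HP2]] := (HQ c Hc').1 w Hcw.
  have Hpc : par c = u by apply/eqP; rewrite -Hch.
  exists ((lam u)%:P * P); split; first by apply: pR_M => //; exact: pR_C (Hlam u).1.
  move=> z Hz; have [HS _] := HK z Hz; have HRz := HR2 z Hz.
  rewrite HP2 // Hpc HvU // hornerCM HA //; field; by rewrite HRz HS.
exists ((lam u)%:P * R); split; first by apply: pR_M => //; exact: pR_C (Hlam u).1.
by move=> z Hz; rewrite Hratio // -HvU //; split => //; exact: (HK z Hz).2.
Qed.

Lemma mainlem (C : numClosedFieldType) (V : eqType) (lev : V -> nat) (par : V -> V)
  (ch : V -> seq V) (lam beta : V -> C) (v : C -> V -> C) :
  (forall x, lev (par x) = (lev x).+1) ->
  (forall x y, (y \in ch x) = (par y == x)) ->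
  (forall x, lam x \is Num.real /\ 0 < lam x) ->
  (forall x, beta x \is Num.real) ->
  (forall z, z \notin Num.real -> forall x, jacobi par ch lam beta (v z) x = z * v z x) ->
  forall k u, (lev u <= k)%N -> exists R, Rgood R /\ Qgood par v u R.
Proof.
move=> Hlev Hch Hlam Hbeta Hv; elim=> [|k IH] u Hu; apply: step => // c Hc;
  have Hp : par c = u by (apply/eqP; rewrite -Hch).
  by have := Hlev c; rewrite Hp => E; rewrite E in Hu.
apply: IH; have := Hlev c; rewrite Hp => E; by rewrite E ltnS in Hu.
Qed.

Unset Implicit Arguments.
Theorem corollary3 (C : numClosedFieldType) (V : eqType)
  (lev : V -> nat) (par : V -> V) (ch : V -> seq V)
  (lam beta : V -> C) (xs : nat -> V) (v : C -> V -> C) :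
  is_levelled_tree lev par ch ->
  (forall x, lam x \is Num.real /\ 0 < lam x) ->
  (forall x, beta x \is Num.real) ->
  (* (x_n) is an infinite path with lev (x_n) = n *)
  (forall n, lev (xs n) = n) ->
  (forall n, xs n.+1 = par (xs n)) ->
  (* v z is the solution of J v = z v normalised by v z (x_0) = 1 *)
  (forall z, z \notin Num.real ->
     (forall x, jacobi par ch lam beta (v z) x = z * v z x) /\ v z (xs 0%N) = 1) ->
  exists (b : nat -> {poly C}) (a : nat -> V -> {poly C}),
    forall n,
      [/\ b n \is a polyOver Num.real,
          (forall x, a n x \is a polyOver Num.real),
          (forall x z, in_subtree par (xs n) x -> z \notin Num.real ->
              (b n).[z] != 0 /\ v z x = (a n x).[z] / (b n).[z]) &
          b n %| b n.+1].
Proof.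
move=> [Hlev Hch _ _ _] Hlam Hbeta Hxl Hxs Hv.
have Hv' : forall z, z \notin Num.real ->
    forall x, jacobi par ch lam beta (v z) x = z * v z x.
  by move=> z Hz; exact: (Hv z Hz).1.
have Hv0 : forall z, z \notin Num.real -> v z (xs 0%N) = 1.
  by move=> z Hz; exact: (Hv z Hz).2.
have Hsub : forall n, in_subtree par (xs n) (xs 0%N).
  move=> n; exists n; elim: n => [|n IH] //=; by rewrite IH Hxs.
have Hn : forall n, exists cn : {poly C},
    (pR cn /\ forall z, z \notin Num.real -> cn.[z] != 0) /\
    exists Pf : V -> {poly C}, forall w, pR (Pf w) /\
      (in_subtree par (xs n) w -> forall z, z \notin Num.real ->
         v z w = (Pf w).[z] / cn.[z]).
  move=> n.
  have [R [[HR1 HR2] [HQ1 _]]] :=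
    mainlem Hlev Hch Hlam Hbeta Hv' (leqnn (lev (xs n))).
  have [P0 [HP01 HP02]] := HQ1 _ (Hsub n).
  rewrite -Hxs in HP02.
  have HP0nz : forall z, z \notin Num.real -> P0.[z] != 0.
    move=> z Hz; apply/eqP => E; have := HP02 z Hz.
    by rewrite Hv0 // E mul0r mulr0 => /eqP; rewrite oner_eq0.
  have Hvn : forall z, z \notin Num.real -> v z (xs n.+1) = R.[z] / P0.[z].
    move=> z Hz; have HRz := HR2 z Hz; have HPz := HP0nz z Hz.
    have := HP02 z Hz; rewrite Hv0 // => E.
    rewrite -[R.[z] / P0.[z]]mul1r E; field; by rewrite HRz HPz.
  exists P0; split; first by split.
  have H2 : forall w, exists P : {poly C}, pR P /\ (in_subtree par (xs n) w ->
      forall z, z \notin Num.real -> v z w = P.[z] / P0.[z]).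
    move=> w; case: (classic (in_subtree par (xs n) w)) => Hw; last first.
      by exists 0; split; [exact: pR_0 | done].
    have [P [HP1 HP2]] := HQ1 w Hw.
    exists P; split => // _ z Hz; have HRz := HR2 z Hz; have HPz := HP0nz z Hz.
    rewrite HP2 // -Hxs Hvn //; field; by rewrite HRz HPz.
  have [Pf HPf] := choice_fun H2; by exists Pf.
have [cf Hcf] := choice_fun Hn.
have H3 : forall n, exists Pf : V -> {poly C}, forall w, pR (Pf w) /\
      (in_subtree par (xs n) w -> forall z, z \notin Num.real ->
         v z w = (Pf w).[z] / (cf n).[z]) := fun n => (Hcf n).2.
have [Pf HPf] := choice_fun H3.
exists (fun n => \prod_(k < n.+1) cf k), (fun n w => Pf n w * \prod_(k < n) cf k).
move=> n; split.
- by apply: pR_prod => k _; exact: (Hcf k).1.1.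
- move=> x; apply: pR_M; first exact: (HPf n x).1.
  by apply: pR_prod => k _; exact: (Hcf k).1.1.
- move=> x z Hx Hz.
  have Hprod : (\prod_(k < n) cf k).[z] != 0.
    rewrite horner_prod; apply: (big_ind (fun y => y != 0)) => //.
      exact: oner_neq0.
      by move=> y1 y2 H1 H2; rewrite mulf_neq0.
    by move=> k _; exact: (Hcf k).1.2 z Hz.
  have Hcn := (Hcf n).1.2 z Hz.
  rewrite big_ord_recr /= !hornerM ((HPf n x).2 Hx z Hz).
  split; first by rewrite mulf_neq0.
  field; by rewrite Hprod Hcn.
- by rewrite [X in _ %| X]big_ord_recr /=; apply: dvdp_mulr; exact: dvdpp.
Qed.
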